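(* Let $\mathbb{C}$ be a regular category which has finite 2-fold subobject decompositions. Then $\mathbb{C}$ has directly decomposable reflexive relations: for every reflexive relation $R$ on a product $X\times Y$, $R=R_1\times_T R_2$.
   Context: A category is regular if it has finite limits and coequalizers of kernel pairs and regular epimorphisms are pullback-stable; images of subobjects under morphisms are given by regular epi–mono factorizations. $\mathbb{C}$ has finite 2-fold subobject decompositions if for every positive integer $n$, all objects $A_1,\dots,A_n$ and all subobjects $S,T$ of $A_1\times\cdots\times A_n$: if for all $i,j\in\{1,\dots,n\}$ the images of $S$ and $T$ under $(\pi_i,\pi_j):A_1\times\cdots\times A_n\to A_i\times A_j$ coincide, then $S=T$. For a relation $R$ on $X\times Y$ (subobject of $(X\times Y)^2$), $R_1$ and $R_2$ are its images under the canonical projections $(X\times Y)^2\to X^2$ and $(X\times Y)^2\to Y^2$. If $r_1:R_{1,0}\to X\times X$ and $r_2:R_{2,0}\to Y\times Y$ represent $R_1,R_2$, then $R_1\times_T R_2$ is the relation on $X\times Y$ represented by the mono $\phi\circ(r_1\times r_2):R_{1,0}\times R_{2,0}\to(X\times Y)^2$, where $\phi:(X\times X)\times(Y\times Y)\to(X\times Y)^2$ is the canonical transpose isomorphism. A relation on $Z$ is reflexive if the diagonal of $Z$ factors through it. *)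

(* Defs.v *)
From mathcomp Require Import all_boot.
Set Implicit Arguments.
Unset Strict Implicit.
Unset Printing Implicit Defensive.

Record Category := {
  ob :> Type;
  hom : ob -> ob -> Type;
  comp : forall a b c : ob, hom b c -> hom a b -> hom a c;
  idm : forall a : ob, hom a a;
  comp_assoc : forall (a b c d : ob) (h : hom c d) (g : hom b c) (f : hom a b),
      comp h (comp g f) = comp (comp h g) f;
  comp_id_l : forall (a b : ob) (f : hom a b), comp (idm b) f = f;
  comp_id_r : forall (a b : ob) (f : hom a b), comp f (idm a) = f
}.
Arguments hom {C} : rename.
Arguments comp {C a b c} : rename.
Arguments idm {C} : rename.

(* comp g f = "g after f" *)

(* chosen binary products (any choice of products is fine: all notions below
   are invariant under isomorphism of products) *)
Record Products (C : Category) := {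
  prod : C -> C -> C;
  pr1 : forall A B : C, hom (prod A B) A;
  pr2 : forall A B : C, hom (prod A B) B;
  pair : forall (Z A B : C), hom Z A -> hom Z B -> hom Z (prod A B);
  pr1_pair : forall Z A B (f : hom Z A) (g : hom Z B), comp (pr1 A B) (pair f g) = f;
  pr2_pair : forall Z A B (f : hom Z A) (g : hom Z B), comp (pr2 A B) (pair f g) = g;
  pair_eta : forall Z A B (h : hom Z (prod A B)),
      h = pair (comp (pr1 A B) h) (comp (pr2 A B) h)
}.
Arguments prod {C} p : rename.
Arguments pr1 {C} p {A B} : rename.
Arguments pr2 {C} p {A B} : rename.
Arguments pair {C} p {Z A B} : rename.

Section Notions.
Variable C : Category.

Definition Mono {A B : C} (m : hom A B) : Prop :=
  forall (Z : C) (g h : hom Z A), comp m g = comp m h -> g = h.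

Definition IsTerminal (T : C) : Prop :=
  forall A : C, exists t : hom A T, forall t' : hom A T, t' = t.

Definition IsPullback {A B D P : C} (f : hom A D) (g : hom B D)
  (a : hom P A) (b : hom P B) : Prop :=
  comp f a = comp g b /\
  forall (Z : C) (x : hom Z A) (y : hom Z B), comp f x = comp g y ->
    exists u : hom Z P, (comp a u = x /\ comp b u = y) /\
      forall u' : hom Z P, comp a u' = x -> comp b u' = y -> u' = u.

Definition IsCoequalizer {K A Q : C} (u v : hom K A) (e : hom A Q) : Prop :=
  comp e u = comp e v /\
  forall (Z : C) (h : hom A Z), comp h u = comp h v ->
    exists k : hom Q Z, comp k e = h /\
      forall k' : hom Q Z, comp k' e = h -> k' = k.

Definition RegularEpi {A Q : C} (e : hom A Q) : Prop :=
  exists (K : C) (u v : hom K A), IsCoequalizer u v e.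

(* Regular category: finite limits (terminal object + pullbacks; binary
   products are given), coequalizers of kernel pairs, pullback-stable
   regular epimorphisms. *)
Definition Regular : Prop :=
  (exists T : C, IsTerminal T) /\
  (forall (A B D : C) (f : hom A D) (g : hom B D),
      exists (P : C) (a : hom P A) (b : hom P B), IsPullback f g a b) /\
  (forall (A D P : C) (f : hom A D) (a b : hom P A), IsPullback f f a b ->
      exists (Q : C) (e : hom A Q), IsCoequalizer a b e) /\
  (forall (A B D P : C) (e : hom A D) (g : hom B D) (a : hom P A) (b : hom P B),
      RegularEpi e -> IsPullback e g a b -> RegularEpi b).

Definition SameSub {A B D : C} (m : hom A D) (n : hom B D) : Prop :=
  (exists x : hom A B, comp n x = m) /\ (exists y : hom B A, comp m y = n).

(* n : I >-> Q represents the image of the subobject m : S >-> P under f,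
   i.e. f o m = n o e is a regular epi - mono factorization *)
Definition IsImage {S P Q I : C} (f : hom P Q) (m : hom S P) (n : hom I Q) : Prop :=
  Mono n /\ exists e : hom S I, RegularEpi e /\ comp f m = comp n e.

Variable Pr : Products C.
Local Notation "A × B" := (prod Pr A B) (at level 40, left associativity).

Definition IsNProduct (n : nat) (A : 'I_n -> C) (P : C) (pi : forall i, hom P (A i)) : Prop :=
  forall (Z : C) (f : forall i, hom Z (A i)),
    exists u : hom Z P, (forall i, comp (pi i) u = f i) /\
      forall u' : hom Z P, (forall i, comp (pi i) u' = f i) -> u' = u.

Definition Finite2FoldDecompositions : Prop :=
  forall (n : nat), 0 < n ->
  forall (A : 'I_n -> C) (P : C) (pi : forall i, hom P (A i)),
    IsNProduct pi ->
  forall (S T : C) (s : hom S P) (t : hom T P), Mono s -> Mono t ->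
    (forall i j : 'I_n, forall (IS IT : C) (ns : hom IS (A i × A j)) (nt : hom IT (A i × A j)),
        IsImage (pair Pr (pi i) (pi j)) s ns ->
        IsImage (pair Pr (pi i) (pi j)) t nt -> SameSub ns nt) ->
    SameSub s t.

Definition prod_map {A B A' B' : C} (f : hom A A') (g : hom B B') :
  hom (A × B) (A' × B') :=
  pair Pr (comp f (pr1 Pr)) (comp g (pr2 Pr)).

Definition diag (Z : C) : hom Z (Z × Z) := pair Pr (idm Z) (idm Z).

Definition ReflexiveRel {Z R0 : C} (r : hom R0 (Z × Z)) : Prop :=
  Mono r /\ exists d : hom Z R0, comp r d = diag Z.

Definition projX2 (X Y : C) : hom ((X × Y) × (X × Y)) (X × X) :=
  pair Pr (comp (pr1 Pr) (pr1 Pr)) (comp (pr1 Pr) (pr2 Pr)).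
Definition projY2 (X Y : C) : hom ((X × Y) × (X × Y)) (Y × Y) :=
  pair Pr (comp (pr2 Pr) (pr1 Pr)) (comp (pr2 Pr) (pr2 Pr)).

(* transpose isomorphism phi : (X×X)×(Y×Y) -> (X×Y)×(X×Y),
   ((x,x'),(y,y')) |-> ((x,y),(x',y')) *)
Definition transpose_iso (X Y : C) : hom ((X × X) × (Y × Y)) ((X × Y) × (X × Y)) :=
  pair Pr (pair Pr (comp (pr1 Pr) (pr1 Pr)) (comp (pr1 Pr) (pr2 Pr)))
          (pair Pr (comp (pr2 Pr) (pr1 Pr)) (comp (pr2 Pr) (pr2 Pr))).

(* R1 ×_T R2 represented by phi o (r1 × r2) *)
Definition relT {X Y R10 R20 : C} (r1 : hom R10 (X × X)) (r2 : hom R20 (Y × Y)) :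
  hom (R10 × R20) ((X × Y) × (X × Y)) :=
  comp (transpose_iso X Y) (prod_map r1 r2).

Definition DirectlyDecomposableReflexiveRelations : Prop :=
  forall (X Y R0 : C) (r : hom R0 ((X × Y) × (X × Y))), ReflexiveRel r ->
  forall (R10 R20 : C) (r1 : hom R10 (X × X)) (r2 : hom R20 (Y × Y)),
    IsImage (projX2 X Y) r r1 -> IsImage (projY2 X Y) r r2 ->
    SameSub r (relT r1 r2).

End Notions.

(* Main.v *)
From mathcomp Require Import all_boot.
Require Import Defs.
Set Implicit Arguments.

Section Proof.
Variable C : Category.
Variable Pr : Products C.
Local Notation "A × B" := (prod Pr A B) (at level 40, left associativity).

Lemma pair_comp (Z W A B : C) (f : hom Z A) (g : hom Z B) (h : hom W Z) :
  comp (pair Pr f g) h = pair Pr (comp f h) (comp g h).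
Proof.
rewrite (pair_eta (comp (pair Pr f g) h)) !comp_assoc pr1_pair pr2_pair //.
Qed.

Lemma hom_ext (Z A B : C) (a b : hom Z (A × B)) :
  comp (pr1 Pr) a = comp (pr1 Pr) b -> comp (pr2 Pr) a = comp (pr2 Pr) b -> a = b.
Proof. by move=> H1 H2; rewrite (pair_eta a) (pair_eta b) H1 H2. Qed.

Ltac csimpl := repeat (rewrite ?pair_comp ?pr1_pair ?pr2_pair ?comp_id_l ?comp_id_r -?comp_assoc).
Ltac unf := rewrite /relT /transpose_iso /prod_map /projX2 /projY2 /diag.
Ltac hsolve := unf; repeat apply: hom_ext; csimpl.

Definition Orth {A Q : C} (e : hom A Q) : Prop :=
  forall (Z W : C) (n : hom Z W) (a : hom A Z) (b : hom Q W), Mono n ->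
    comp n a = comp b e -> exists k : hom Q Z, comp n k = b /\ comp k e = a.

Lemma regular_orth (A Q : C) (e : hom A Q) : RegularEpi e -> Orth e.
Proof.
move=> [K [u [v [Heq Huniq]]]] Z W n a b Hn Hsq.
have Hauv : comp a u = comp a v.
  apply: Hn; rewrite !comp_assoc Hsq -!comp_assoc Heq //.
have [k [Hk _]] := Huniq _ _ Hauv.
exists k; split => //.
have Hbe : comp (comp b e) u = comp (comp b e) v by rewrite -!comp_assoc Heq.
have [k0 [_ Hk0]] := Huniq _ _ Hbe.
rewrite (Hk0 b erefl) (Hk0 (comp n k)) //.
by rewrite -comp_assoc Hk.
Qed.

Lemma le_ST (S T P Q IS IT : C) (f : hom P Q) (s : hom S P) (t : hom T P)
  (ns : hom IS Q) (nt : hom IT Q) (al : hom S T) :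
  IsImage f s ns -> IsImage f t nt -> comp t al = s -> exists y, comp nt y = ns.
Proof.
move=> [Hns [es [Res Hs]]] [Hnt [et [Ret Ht]]] Hal.
have Hsq : comp nt (comp et al) = comp ns es.
  by rewrite comp_assoc -Ht -comp_assoc Hal Hs.
have [k [Hk _]] := regular_orth Res _ _ Hnt Hsq.
by exists k.
Qed.

Lemma le_TS (S T P Q IS IT : C) (f : hom P Q) (s : hom S P) (t : hom T P)
  (ns : hom IS Q) (nt : hom IT Q) :
  IsImage f s ns -> IsImage f t nt -> (exists h, comp f t = comp ns h) ->
  exists x, comp ns x = nt.
Proof.
move=> [Hns [es [Res Hs]]] [Hnt [et [Ret Ht]]] [h Hh].
have Hsq : comp ns h = comp nt et by rewrite -Hh Ht.
have [k [Hk _]] := regular_orth Ret _ _ Hns Hsq.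
by exists k.
Qed.

Lemma caseA (S T P Q IS W V R : C) (f : hom P Q) (s : hom S P) (t : hom T P)
  (ns : hom IS Q) (g : hom V Q) (c : hom T V) (e : hom S V) :
  IsImage f s ns -> Orth e -> comp f t = comp g c -> comp f s = comp g e ->
  exists h, comp f t = comp ns h.
Proof.
move=> [Hns [es [Res Hs]]] He Ht Hse.
have [k [Hk _]] := He _ _ _ es g Hns (etrans (esym Hs) Hse).
by exists (comp k c); rewrite Ht -Hk comp_assoc.
Qed.

Lemma caseB (Z S T Q IS : C) (f : hom (Z × Z) Q) (s : hom S (Z × Z)) (t : hom T (Z × Z))
  (ns : hom IS Q) (d : hom Z S) (u : hom T Z) :
  IsImage f s ns -> comp s d = diag Pr Z -> comp f t = comp (comp f (diag Pr Z)) u ->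
  exists h, comp f t = comp ns h.
Proof.
move=> [Hns [es [Res Hs]]] Hd Ht.
by exists (comp es (comp d u)); rewrite Ht -Hd !comp_assoc Hs.
Qed.

Definition Anat (X Y : C) (k : nat) : C :=
  match k with 0 => X | 1 => Y | 2 => X | _ => Y end.

Definition Api (X Y : C) (k : nat) : hom ((X × Y) × (X × Y)) (Anat X Y k) :=
  match k return hom ((X × Y) × (X × Y)) (Anat X Y k) with
  | 0 => comp (pr1 Pr) (pr1 Pr)
  | 1 => comp (pr2 Pr) (pr1 Pr)
  | 2 => comp (pr1 Pr) (pr2 Pr)
  | 3 => comp (pr2 Pr) (pr2 Pr)
  | _ => comp (pr2 Pr) (pr2 Pr)
  end.

End Proof.

Ltac csimpl := repeat (rewrite ?pair_comp ?pr1_pair ?pr2_pair ?comp_id_l ?comp_id_r -?comp_assoc).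
Ltac unf := rewrite /relT /transpose_iso /prod_map /projX2 /projY2 /diag.
Ltac hsolve := unf; repeat apply: hom_ext; csimpl.

Theorem proposition4p8 (C : Category) (Pr : Products C) :
  Regular C -> Finite2FoldDecompositions Pr ->
  DirectlyDecomposableReflexiveRelations Pr.
Proof.
move=> _ HF X Y R0 r [Hr [d Hd]] R10 R20 r1 r2 [Hr1 [e1 [Re1 He1]]] [Hr2 [e2 [Re2 He2]]].
have E10 : comp (pr1 Pr) (comp r1 e1) = comp (pr1 Pr) (comp (pr1 Pr) r).
  by rewrite -He1; unf; csimpl.
have E20 : comp (pr2 Pr) (comp r1 e1) = comp (pr1 Pr) (comp (pr2 Pr) r).
  by rewrite -He1; unf; csimpl.
have E11 : comp (pr1 Pr) (comp r2 e2) = comp (pr2 Pr) (comp (pr1 Pr) r).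
  by rewrite -He2; unf; csimpl.
have E21 : comp (pr2 Pr) (comp r2 e2) = comp (pr2 Pr) (comp (pr2 Pr) r).
  by rewrite -He2; unf; csimpl.
have Hal : comp (relT r1 r2) (pair Pr e1 e2) = r.
  by hsolve; rewrite ?E10 ?E20 ?E11 ?E21.
have Htm : Mono (relT r1 r2).
  move=> Z g h Hgh.
  have PX : comp (projX2 Pr X Y) (relT r1 r2) = comp r1 (pr1 Pr) by hsolve.
  have PY : comp (projY2 Pr X Y) (relT r1 r2) = comp r2 (pr2 Pr) by hsolve.
  apply: hom_ext.
    apply: Hr1; have := f_equal (comp (projX2 Pr X Y)) Hgh.
    by rewrite 2!comp_assoc PX -2!comp_assoc.
  apply: Hr2; have := f_equal (comp (projY2 Pr X Y)) Hgh.
  by rewrite 2!comp_assoc PY -2!comp_assoc.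
have Hprod : IsNProduct (fun i : 'I_4 => Api Pr X Y i).
  move=> Z f.
  pose o0 := @Ordinal 4 0 isT. pose o1 := @Ordinal 4 1 isT.
  pose o2 := @Ordinal 4 2 isT. pose o3 := @Ordinal 4 3 isT.
  exists (pair Pr (pair Pr (f o0) (f o1)) (pair Pr (f o2) (f o3))); split.
    case=> [[|[|[|[|m]]]] Hm] //=; csimpl; by rewrite (bool_irrelevance Hm isT).
  move=> u' Hu'.
  have H0 := Hu' o0; have H1 := Hu' o1; have H2 := Hu' o2; have H3 := Hu' o3.
  simpl in H0, H1, H2, H3; rewrite -!comp_assoc in H0 H1 H2 H3.
  by repeat apply: hom_ext; csimpl; rewrite ?H0 ?H1 ?H2 ?H3.
apply: (HF 4 isT (fun i : 'I_4 => Anat C X Y i) _ _ Hprod R0 _ r (relT r1 r2) Hr Htm).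
move=> [i Hi] [j Hj]; case: i Hi => [|[|[|[|i]]]] Hi //; case: j Hj => [|[|[|[|j]]]] Hj //.
all: move=> IS IT ns nt HS HT; split; [eapply le_ST; [exact HS | exact HT | exact Hal] | apply: (le_TS HS HT)].
- apply: (caseB _ _ _ _ _ (pair Pr (comp (pr1 Pr) (comp r1 (pr1 Pr))) (comp (pr1 Pr) (comp r2 (pr2 Pr)))) HS Hd); simpl; hsolve; rewrite ?E10 ?E20 ?E11 ?E21 //.
- apply: (caseB _ _ _ _ _ (pair Pr (comp (pr1 Pr) (comp r1 (pr1 Pr))) (comp (pr1 Pr) (comp r2 (pr2 Pr)))) HS Hd); simpl; hsolve; rewrite ?E10 ?E20 ?E11 ?E21 //.
- apply: (caseA _ _ _ _ r1 (pr1 Pr) HS (regular_orth Re1)); simpl; hsolve; rewrite ?E10 ?E20 ?E11 ?E21 //.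
- apply: (caseB _ _ _ _ _ (pair Pr (comp (pr1 Pr) (comp r1 (pr1 Pr))) (comp (pr2 Pr) (comp r2 (pr2 Pr)))) HS Hd); simpl; hsolve; rewrite ?E10 ?E20 ?E11 ?E21 //.
- apply: (caseB _ _ _ _ _ (pair Pr (comp (pr1 Pr) (comp r1 (pr1 Pr))) (comp (pr1 Pr) (comp r2 (pr2 Pr)))) HS Hd); simpl; hsolve; rewrite ?E10 ?E20 ?E11 ?E21 //.
- apply: (caseB _ _ _ _ _ (pair Pr (comp (pr1 Pr) (comp r1 (pr1 Pr))) (comp (pr1 Pr) (comp r2 (pr2 Pr)))) HS Hd); simpl; hsolve; rewrite ?E10 ?E20 ?E11 ?E21 //.
- apply: (caseB _ _ _ _ _ (pair Pr (comp (pr2 Pr) (comp r1 (pr1 Pr))) (comp (pr1 Pr) (comp r2 (pr2 Pr)))) HS Hd); simpl; hsolve; rewrite ?E10 ?E20 ?E11 ?E21 //.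
- apply: (caseA _ _ _ _ r2 (pr2 Pr) HS (regular_orth Re2)); simpl; hsolve; rewrite ?E10 ?E20 ?E11 ?E21 //.
- apply: (caseA _ _ _ _ (pair Pr (comp (pr2 Pr) r1) (comp (pr1 Pr) r1)) (pr1 Pr) HS (regular_orth Re1)); simpl; hsolve; rewrite ?E10 ?E20 ?E11 ?E21 //.
- apply: (caseB _ _ _ _ _ (pair Pr (comp (pr2 Pr) (comp r1 (pr1 Pr))) (comp (pr1 Pr) (comp r2 (pr2 Pr)))) HS Hd); simpl; hsolve; rewrite ?E10 ?E20 ?E11 ?E21 //.
- apply: (caseB _ _ _ _ _ (pair Pr (comp (pr2 Pr) (comp r1 (pr1 Pr))) (comp (pr1 Pr) (comp r2 (pr2 Pr)))) HS Hd); simpl; hsolve; rewrite ?E10 ?E20 ?E11 ?E21 //.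
- apply: (caseB _ _ _ _ _ (pair Pr (comp (pr2 Pr) (comp r1 (pr1 Pr))) (comp (pr2 Pr) (comp r2 (pr2 Pr)))) HS Hd); simpl; hsolve; rewrite ?E10 ?E20 ?E11 ?E21 //.
- apply: (caseB _ _ _ _ _ (pair Pr (comp (pr1 Pr) (comp r1 (pr1 Pr))) (comp (pr2 Pr) (comp r2 (pr2 Pr)))) HS Hd); simpl; hsolve; rewrite ?E10 ?E20 ?E11 ?E21 //.
- apply: (caseA _ _ _ _ (pair Pr (comp (pr2 Pr) r2) (comp (pr1 Pr) r2)) (pr2 Pr) HS (regular_orth Re2)); simpl; hsolve; rewrite ?E10 ?E20 ?E11 ?E21 //.
- apply: (caseB _ _ _ _ _ (pair Pr (comp (pr2 Pr) (comp r1 (pr1 Pr))) (comp (pr2 Pr) (comp r2 (pr2 Pr)))) HS Hd); simpl; hsolve; rewrite ?E10 ?E20 ?E11 ?E21 //.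
- apply: (caseB _ _ _ _ _ (pair Pr (comp (pr1 Pr) (comp r1 (pr1 Pr))) (comp (pr2 Pr) (comp r2 (pr2 Pr)))) HS Hd); simpl; hsolve; rewrite ?E10 ?E20 ?E11 ?E21 //.
Qed.
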